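(* (i) $\mathrm{Box}(\Sigma_+)\setminus\mathrm{Box}(\Sigma^{es}_+)=\mathrm{Box}(\Sigma_-)\setminus\mathrm{Box}(\Sigma^{es}_-)$; moreover, for any $v$ in these sets, written $v=\sum_jq_jv_j$ with $0\le q_j<1$ and $q_j=0$ if $\mathbb R_{\ge0}v_j\not\prec\sigma(v)$, the minimal cone $\sigma(v)$ containing $v$ is the same in $\Sigma_+$ and $\Sigma_-$, and the associated $n$-tuples of roots of unity $(y^v_1,\dots,y^v_n)$, $y^v_j=e^{2\pi iq_j}$, are the same. (ii) For any $v\in\mathrm{Box}(\Sigma^{es}_+)$ with associated $y^v$ (computed in $\Sigma_+$) and any $t\in\mathcal I(y^v)$, the $n$-tuple $(y^v_1t^{h_1},\dots,y^v_nt^{h_n})$ equals $y^{v'}$ (computed in $\Sigma_-$) for some $v'\in\mathrm{Box}(\Sigma^{es}_-)$, i.e. determines the maximal ideal of $K_0(\mathbb P_{\Sigma_-},\mathbb C)$ corresponding to an element of $\mathrm{Box}(\Sigma^{es}_-)$; moreover every $n$-tuple $y^{v'}$ with $v'\in\mathrm{Box}(\Sigma^{es}_-)$ arises in this way for suitable $v\in\mathrm{Box}(\Sigma^{es}_+)$ and $t\in\mathcal I(y^v)$.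
   Context: $N\cong\mathbb Z^d$ lattice, $\mathcal A=\{v_1,\dots,v_n\}\subset N$ generating $N$ with a homomorphism $\mathrm h:N\to\mathbb Z$, $\mathrm h(v_j)=1$; $\mathbb L=\{l\in\mathbb Z^n:\sum l_jv_j=0\}$; $\Delta=\mathrm{Conv}(\mathcal A)$. $\Sigma_+,\Sigma_-$ are the simplicial fans supported on $\mathbb R_{\ge0}\Delta$ induced by two regular triangulations of $\Delta$ with vertices in $\mathcal A$ that are joined by an edge of the secondary polytope. There is a circuit $I\subset\mathcal A$ with a primitive relation $h=(h_1,\dots,h_n)\in\mathbb L$ ($\sum h_jv_j=0$, $I=\{v_j:h_j\ne0\}$), $I_\pm=\{v_j:\pm h_j>0\}$, such that, calling $\mathcal F\subset\mathcal A\setminus I$ separating if $\mathcal F\cup(I\setminus\{v\})$ generates a maximal cone of $\Sigma_\pm$ for every $v\in I_\pm$, $\Sigma_-$ is obtained from $\Sigma_+$ by replacing all maximal cones generated by $\mathcal F\cup(I\setminus\{v\})$, $v\in I_+$, with the cones generated by $\mathcal F\cup(I\setminus\{v\})$, $v\in I_-$, for all separating $\mathcal F$. Maximal cones of $\Sigma_\pm$ of the form $\mathcal F\cup(I\setminus\{v\})$ ($\mathcal F$ separating, $v\in I_\pm$) are called essential; $\Sigma^{es}_\pm(d)$ is the set of them. For a fan $\Sigma$, $\mathrm{Box}(\Sigma)$ is the set of $v\in N$ with $v=\sum q_jv_j$, $0\le q_j<1$, $q_j=0$ unless $v_j$ spans a ray of a fixed maximal cone; $\sigma(v)$ is the smallest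 cone containing $v$; $y^v_j=e^{2\pi iq_j}$. $\mathrm{Box}(\Sigma^{es}_\pm)$ is the set of $v\in\mathrm{Box}(\Sigma_\pm)$ whose $\sigma(v)$ is a face of some essential maximal cone. For $r\in(\mathbb C^* )^n$, $\mathcal I(r)$ is the set of $t\in\mathbb C^*$ such that $r_jt^{h_j}=1$ for some $j$ with $v_j\in I_-$. (The maximal ideals of $K_0(\mathbb P_{\Sigma_-},\mathbb C)=\mathbb C[R_j^{\pm1}]/(\text{relations})$ are $(R_j-y^{v'}_j)_j$, $v'\in\mathrm{Box}(\Sigma_-)$.) *)

(* Defs.v *)
From mathcomp Require Import all_boot all_order all_algebra.
From mathcomp Require Import all_classical all_reals all_analysis.
From mathcomp.real_closed Require Export complex.

Set Implicit Arguments.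
Unset Strict Implicit.
Unset Printing Implicit Defensive.

Import GRing.Theory Num.Theory.
Local Open Scope ring_scope.

(* N = Z^d, points of N are functions 'I_d -> int, points of
   N_R = R^d are functions 'I_d -> R.  The configuration A = {v_1,...,v_n} is
   v : 'I_n -> 'I_d -> int.  Cones of the (simplicial) fans are encoded by the
   set of indices j of the v_j spanning their rays; a triangulation T is the
   set of its maximal simplices (= maximal cones of the induced fan). *)

Section Defs.
Variables (R : realType) (d n : nat) (v : 'I_n -> 'I_d -> int).

Definition lincomb (c : 'I_n -> R) (x : 'I_d -> R) : Prop :=
  forall i : 'I_d, x i = \sum_(j < n) c j * (v j i)%:~R.

Definition in_cone (F : {set 'I_n}) (x : 'I_d -> R) : Prop :=
  exists c : 'I_n -> R, (forall j, 0 <= c j) /\ (forall j, j \notin F -> c j = 0)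
                        /\ lincomb c x.

Definition lin_indep (S : {set 'I_n}) : Prop :=
  forall c : 'I_n -> R, (forall j, j \notin S -> c j = 0) ->
    lincomb c (fun _ => 0) -> forall j, c j = 0.

(* T is a triangulation of Delta = Conv(A) with vertices in A, described through
   the induced simplicial fan supported on R_{>=0} Delta: every simplex has d
   linearly independent vertices (as A lies in the hyperplane h = 1, this is
   affine independence of full dimension), the cones cover R_{>=0} Delta and
   two cones meet along the cone over the common face. *)
Definition triangulation (T : {set {set 'I_n}}) : Prop :=
  [/\ forall S, S \in T -> #|S| = d /\ lin_indep S,
      forall x, in_cone [set: 'I_n] x -> exists2 S, S \in T & in_cone S x &
      forall S S' x, S \in T -> S' \in T -> in_cone S x -> in_cone S' x ->
        in_cone (S :&: S') x].

Definition lform (psi : 'I_d -> R) (j : 'I_n) : R :=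
  \sum_(i < d) psi i * (v j i)%:~R.

(* regular (coherent) triangulation: induced by a height function omega, each
   maximal simplex being a lower facet of the lifted configuration, all points
   of A not in the simplex lying strictly above it. *)
Definition regular_triangulation (T : {set {set 'I_n}}) : Prop :=
  triangulation T /\
  exists omega : 'I_n -> R, forall S, S \in T -> exists psi : 'I_d -> R,
    (forall j, j \in S -> lform psi j = omega j) /\
    (forall j, j \notin S -> lform psi j < omega j).

Definition simplex_mx (S : {set 'I_n}) : 'M[R]_d :=
  \matrix_(i < d, k < d)
    match nth None [seq Some j | j <- enum S] k with
    | Some j => (v j i)%:~R
    | None => 0
    end.

Definition svol (S : {set 'I_n}) : R := `|\det (simplex_mx S)|.

Definition gkz (T : {set {set 'I_n}}) (j : 'I_n) : R :=
  \sum_(S in T | j \in S) svol S.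

(* T1 and T2 are joined by an edge of the secondary polytope
   Conv{ gkz T | T regular triangulation }: they are distinct vertices and some
   linear functional w attains its minimum on the secondary polytope exactly
   on the segment [gkz T1, gkz T2]. *)
Definition secondary_edge (T1 T2 : {set {set 'I_n}}) : Prop :=
  regular_triangulation T1 /\ regular_triangulation T2 /\ gkz T1 <> gkz T2 /\
  exists w : 'I_n -> R,
    \sum_(j < n) w j * gkz T1 j = \sum_(j < n) w j * gkz T2 j /\
    forall T, regular_triangulation T ->
      \sum_(j < n) w j * gkz T1 j <= \sum_(j < n) w j * gkz T j /\
      (\sum_(j < n) w j * gkz T j = \sum_(j < n) w j * gkz T1 j ->
         gkz T = gkz T1 \/ gkz T = gkz T2).

Definition relation (l : 'I_n -> int) : Prop :=
  forall i : 'I_d, \sum_(j < n) l j * v j i = 0.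

Definition supp (h : 'I_n -> int) : {set 'I_n} := [set j | h j != 0].
Definition suppP (h : 'I_n -> int) : {set 'I_n} := [set j | 0 < h j].
Definition suppN (h : 'I_n -> int) : {set 'I_n} := [set j | h j < 0].

Definition primitive_circuit_relation (h : 'I_n -> int) : Prop :=
  [/\ relation h, supp h != finset.set0,
      (forall J : {set 'I_n}, J \proper supp h -> lin_indep J) &
      (forall (k : int) (l : 'I_n -> int), relation l ->
          (forall j, h j = k * l j) -> k = 1 \/ k = -1)].

Definition separating (T : {set {set 'I_n}}) (I Is : {set 'I_n})
  (F : {set 'I_n}) : Prop :=
  [disjoint F & I] /\ forall j, j \in Is -> F :|: (I :\ j) \in T.

Definition essential (T : {set {set 'I_n}}) (I Is : {set 'I_n})
  (E : {set 'I_n}) : Prop :=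
  exists F j, [/\ separating T I Is F, j \in Is & E = F :|: (I :\ j)].

Definition circuit_flip (Tp Tm : {set {set 'I_n}}) (h : 'I_n -> int) : Prop :=
  forall S, S \in Tm <->
    (S \in Tp /\ ~ essential Tp (supp h) (suppP h) S) \/
    (exists F j, [/\ separating Tp (supp h) (suppP h) F, j \in suppN h
                   & S = F :|: (supp h :\ j)]).

Definition fan_cone (T : {set {set 'I_n}}) (F : {set 'I_n}) : Prop :=
  exists2 S, S \in T & F \subset S.

Definition min_cone (T : {set {set 'I_n}}) (x : 'I_d -> int) (F : {set 'I_n}) :
  Prop :=
  [/\ fan_cone T F, in_cone F (fun i => (x i)%:~R) &
      forall G, fan_cone T G -> in_cone G (fun i => (x i)%:~R) -> F \subset G].

Definition box (T : {set {set 'I_n}}) (x : 'I_d -> int) : Prop :=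
  exists2 S, S \in T & exists q : 'I_n -> R,
    [/\ forall j, 0 <= q j < 1, forall j, j \notin S -> q j = 0 &
        lincomb q (fun i => (x i)%:~R)].

Definition box_es (T : {set {set 'I_n}}) (I Is : {set 'I_n}) (x : 'I_d -> int) :
  Prop :=
  box T x /\ exists F, min_cone T x F /\
    exists E, essential T I Is E /\ F \subset E.

Definition box_rep (T : {set {set 'I_n}}) (x : 'I_d -> int) (q : 'I_n -> R) :
  Prop :=
  exists F, [/\ min_cone T x F, forall j, 0 <= q j < 1,
              forall j, j \notin F -> q j = 0 & lincomb q (fun i => (x i)%:~R)].

End Defs.

Local Open Scope complex_scope.

Definition yvec (R : realType) (n : nat) (q : 'I_n -> R) (j : 'I_n) : R[i] :=
  cos (2 * pi * q j) +i* sin (2 * pi * q j).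

Definition calI (R : realType) (n : nat) (h : 'I_n -> int) (r : 'I_n -> R[i])
  (t : R[i]) : Prop :=
  t != 0 /\ exists2 j, j \in suppN h & r j * t ^ h j = 1.

(* Main.v *)
Set Warnings "-all".
Require Import Defs.
From mathcomp Require Import all_boot all_order all_algebra.
From mathcomp Require Import all_classical all_reals all_analysis.
From mathcomp.real_closed Require Import complex.
From mathcomp Require Import ring lra.
Import Order.TTheory GRing.Theory Num.Theory.
Set Implicit Arguments. Unset Strict Implicit. Unset Printing Implicit Defensive.
Local Open Scope ring_scope.

Section C.
Local Open Scope complex_scope.
Variable R : realType.
Definition ee (a : R) : R[i] := (cos (2 * pi * a) +i* sin (2 * pi * a))%C.
Lemma eeD a b : ee a * ee b = ee (a + b).
Proof.
rewrite /ee !mulrDr cosD sinD /=.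
congr (_ +i* _); ring.
Qed.
Lemma ee0 : ee 0 = 1.
Proof. by rewrite /ee mulr0 cos0 sin0. Qed.
Lemma eeN a : ee (- a) * ee a = 1.
Proof. by rewrite eeD addNr ee0. Qed.
Lemma ee_neq0 a : ee a != 0.
Proof. apply/negP => /eqP H; have := eeN a; rewrite H mulr0 => /eqP; by rewrite eq_sym oner_eq0. Qed.
Lemma eeV a : (ee a)^-1 = ee (- a).
Proof. by rewrite -[LHS]mul1r -(eeN a) mulfK ?ee_neq0. Qed.
Lemma ee_nat (k : nat) : ee k%:R = 1.
Proof.
elim: k => [|k IH]; first by rewrite ee0.
rewrite -addn1 natrD -eeD IH mul1r /ee mulr1.
have -> : 2 * pi = pi *+ 2 :> R by rewrite mulr_natl.
by rewrite cos2pi sin2pi.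
Qed.
Lemma ee_int (k : int) : ee k%:~R = 1.
Proof.
case: k => k; first by rewrite ee_nat.
rewrite NegzE mulrNz -(eeN (k.+1)%:~R) ee_nat mulr1 //.
Qed.
Lemma eeDz a (k : int) : ee (a + k%:~R) = ee a.
Proof. by rewrite -eeD ee_int mulr1. Qed.
Lemma eeXn a (m : nat) : ee a ^+ m = ee (a * m%:R).
Proof.
elim: m => [|m IH]; first by rewrite expr0 mulr0 ee0.
by rewrite exprSr IH eeD -addn1 natrD mulrDr mulr1.
Qed.
Lemma eeX a (m : int) : ee a ^ m = ee (a * m%:~R).
Proof.
case: m => m; first exact: eeXn.
rewrite NegzE -exprnN eeXn eeV; congr ee; rewrite mulrN; congr (- _); rewrite -pmulrn; done.
Qed.
Lemma norm_ee a : `|ee a| = 1.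
Proof.
rewrite normc_def /= cos2Dsin2 sqrtr1 //.
Qed.
Lemma ee_eq1 a : ee a = 1 -> 0 <= a < 1 -> a = 0.
Proof.
case=> Hc _ /andP[a0 a1].
have hs : sin (pi * a) = 0.
  have : cos ((pi * a) + (pi * a)) = 1 by rewrite -Hc; congr cos; ring.
  rewrite cosD => H.
  have : sin (pi * a) ^+ 2 = 0.
    have := cos2Dsin2 (pi * a). rewrite !expr2. lra.
  by move/eqP; rewrite sqrf_eq0 => /eqP.
case: (ltrgt0P a) a0 => // ap _.
have : 0 < sin (pi * a).
  apply: sin_gt0_pi; apply/andP; split; first by rewrite mulr_gt0 // pi_gt0.
  by rewrite -[X in _ < X]mulr1 ltr_pM2l // pi_gt0.
by rewrite hs ltxx.
Qed.
Lemma ee_surj (t : R[i]) : `|t| = 1 -> exists th, t = ee th.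
Proof.
case: t => a b; rewrite normc_def /= => -[] H.
have H1 : a ^+ 2 + b ^+ 2 = 1.
  by rewrite -[LHS]sqr_sqrtr ?H ?expr1n // addr_ge0 // sqr_ge0.
have ha : -1 <= a <= 1.
  have : a ^+ 2 <= 1 by rewrite -H1 lerDl sqr_ge0.
  rewrite expr2 => h2; apply/andP; split; nra.
have hpi : 0 < 2 * pi :> R by rewrite mulr_gt0 // pi_gt0.
have hb : Num.sqrt (1 - a ^+ 2) = `|b|.
  by rewrite -H1 addrC addKr sqrtr_sqr.
case: (lerP 0 b) => b0.
  exists (acos a / (2 * pi)); rewrite /ee mulrC mulfVK ?gt_eqF //.
  by rewrite acosK ?in_itv //= sin_acos // hb ger0_norm.
exists (- (acos a / (2 * pi))); rewrite /ee mulrN mulrC mulfVK ?gt_eqF //.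
by rewrite cosN sinN acosK ?in_itv //= sin_acos // hb ltr0_norm ?opprK.
Qed.
Lemma norm_t1 a (t : R[i]) (m : int) : m != 0 -> ee a * t ^ m = 1 -> `|t| = 1.
Proof.
move=> m0 /(congr1 Num.norm); rewrite normrM norm_ee mul1r normr1 => H.
apply/eqP; case: m m0 H => k k0 H.
  have : `|t| ^+ k == 1 by rewrite -normrX; apply/eqP; exact: H.
  by rewrite pexpr_eq1 // lt0n; case: k k0 {H}.
move: H; rewrite NegzE -exprnN normfV normrX => /eqP; rewrite invr_eq1.
by rewrite pexpr_eq1.
Qed.
End C.
Section G.
Variables (R : realType) (d n : nat) (v : 'I_n -> 'I_d -> int).

Lemma lincomb_sub (c1 c2 : 'I_n -> R) x1 x2 : lincomb v c1 x1 -> lincomb v c2 x2 ->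
  lincomb v (fun j => c1 j - c2 j) (fun i => x1 i - x2 i).
Proof.
move=> H1 H2 i; rewrite H1 H2 -sumrB; apply: eq_bigr => j _; by rewrite mulrBl.
Qed.

Lemma lin_unique (S : {set 'I_n}) (c1 c2 : 'I_n -> R) x : lin_indep R v S ->
  (forall j, j \notin S -> c1 j = 0) -> (forall j, j \notin S -> c2 j = 0) ->
  lincomb v c1 x -> lincomb v c2 x -> forall j, c1 j = c2 j.
Proof.
move=> HS h1 h2 l1 l2 j; apply/eqP; rewrite -subr_eq0; apply/eqP.
apply: (HS (fun j => c1 j - c2 j)).
  by move=> k kS; rewrite h1 // h2 // subr0.
have := lincomb_sub l1 l2; congr lincomb; apply: funext => i; by rewrite subrr.
Qed.

Lemma min_coneP (T : {set {set 'I_n}}) (S : {set 'I_n}) (c : 'I_n -> R) (x : 'I_d -> int) :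
  triangulation R v T -> S \in T -> (forall j, 0 <= c j) -> (forall j, j \notin S -> c j = 0) ->
  lincomb v c (fun i => (x i)%:~R) -> min_cone R v T x [set j | c j != 0].
Proof.
move=> [T1 _ T3] ST c0 cS cx; split.
- exists S => //. apply/fintype.subsetP => j; rewrite inE; apply: contraR => /cS ->; by rewrite eqxx.
- exists c; split => //; split => // j; rewrite inE negbK; by move/eqP.
- move=> G [S' S'T GS'] [c' [c'0 [c'G c'x]]].
  have c'S' : forall j, j \notin S' -> c' j = 0.
    move=> j jS; apply: c'G; apply: contra jS; exact: (fintype.subsetP GS').
  have [c'' [c''0 [c''S c''x]]] := T3 _ _ _ ST S'T (ex_intro _ c (conj c0 (conj cS cx)))
       (ex_intro _ c' (conj c'0 (conj c'S' c'x))).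
  have e1 := lin_unique (proj2 (T1 _ ST)) cS (fun j jS => c''S j (contra (fun h => (fintype.subsetP (subsetIl S S')) j h) jS)) cx c''x.
  have e2 := lin_unique (proj2 (T1 _ S'T)) c'S' (fun j jS => c''S j (contra (fun h => (fintype.subsetP (subsetIr S S')) j h) jS)) c'x c''x.
  apply/fintype.subsetP => j; rewrite inE e1 -e2; apply: contraR => /c'G ->; by rewrite eqxx.
Qed.

Lemma circuit_contra (T : {set {set 'I_n}}) (S S' : {set 'I_n}) (c : 'I_n -> R) k :
  triangulation R v T -> S \in T -> S' \in T -> lincomb v c (fun _ => 0) ->
  (forall j, 0 < c j -> j \in S) -> (forall j, c j < 0 -> j \in S') ->
  0 < c k -> k \notin S' -> False.
Proof.
move=> [T1 _ T3] ST S'T cl cS cS' ck kS'.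
pose cp j := if 0 < c j then c j else 0.
pose cn j := if c j < 0 then - c j else 0.
pose p i := \sum_(j < n) cp j * (v j i)%:~R.
have lp : lincomb v cp p by [].
have ln : lincomb v cn p.
  move=> i; rewrite /p; apply/eqP; rewrite -subr_eq0 -sumrB; apply/eqP.
  rewrite [RHS](cl i); apply: eq_bigr => j _; rewrite -mulrBl; congr (_ * _).
  rewrite /cp /cn; case: (ltrgt0P (c j)) => H; lra.
have cpS : forall j, j \notin S -> cp j = 0.
  move=> j jS; rewrite /cp; case: ifP => // /cS; by rewrite (negbTE jS).
have cnS : forall j, j \notin S' -> cn j = 0.
  move=> j jS; rewrite /cn; case: ifP => // /cS'; by rewrite (negbTE jS).
have cp0 : forall j, 0 <= cp j by move=> j; rewrite /cp; case: ifP => // /ltW.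
have cn0 : forall j, 0 <= cn j by move=> j; rewrite /cn; case: ifP => // ?; rewrite oppr_ge0 ltW.
have [c'' [_ [c''S c''x]]] := T3 _ _ _ ST S'T (ex_intro _ cp (conj cp0 (conj cpS lp)))
       (ex_intro _ cn (conj cn0 (conj cnS ln))).
have e1 := lin_unique (proj2 (T1 _ ST)) cpS (fun j jS => c''S j (contra (fun h => (fintype.subsetP (subsetIl S S')) j h) jS)) lp c''x.
have := e1 k; rewrite c''S; last by rewrite inE negb_and kS' orbT.
by rewrite /cp ck => /eqP; rewrite gt_eqF.
Qed.
End G.

Section H.
Variables (R : realType) (d n : nat) (v : 'I_n -> 'I_d -> int).

Lemma min_cone_uniq (T : {set {set 'I_n}}) x F1 F2 :
  min_cone R v T x F1 -> min_cone R v T x F2 -> F1 = F2.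
Proof.
move=> [a1 b1 c1] [a2 b2 c2]; apply/eqP; rewrite finset.eqEsubset; apply/andP; split.
  exact: c1. exact: c2.
Qed.

Lemma supp_sub (S : {set 'I_n}) (c : 'I_n -> R) :
  (forall j, j \notin S -> c j = 0) -> [set j | c j != 0] \subset S.
Proof.
move=> cS; apply/fintype.subsetP => j; rewrite inE; apply: contraR => /cS ->; by rewrite eqxx.
Qed.

Lemma lincomb_shift (q hh : 'I_n -> R) (x : 'I_d -> int) (th : R) (fl : 'I_n -> int) :
  lincomb v q (fun i => (x i)%:~R) -> lincomb v hh (fun _ => 0) ->
  lincomb v (fun j => q j + th * hh j - (fl j)%:~R)
    (fun i => (x i - \sum_(j < n) fl j * v j i)%:~R).
Proof.
move=> Hq Hh i; rewrite intrB rmorph_sum /= (Hq i).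
rewrite [RHS](eq_bigr (fun j => q j * (v j i)%:~R + th * (hh j * (v j i)%:~R)
   - (fl j)%:~R * (v j i)%:~R)); last by move=> j _; ring.
rewrite sumrB big_split /= -mulr_sumr -(Hh i) mulr0 addr0; congr (_ - _).
by apply: eq_bigr => j _; rewrite intrM.
Qed.

Definition frac (r : R) := r - (Num.floor r)%:~R.

Lemma frac01 r : 0 <= frac r < 1.
Proof.
rewrite /frac subr_ge0 Num.Theory.floor_le /=.
have := Num.Theory.floorD1_gt r; rewrite intrD; lra.
Qed.

Lemma frac0 : frac 0 = 0.
Proof. by rewrite /frac Num.Theory.floor0 subr0. Qed.

Lemma ee_frac r : ee (frac r) = ee r.
Proof. by rewrite /frac -intrN eeDz. Qed.
End H.

Unset Implicit Arguments.
Set Implicit Arguments.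

Lemma setUD_inj (n : nat) (F F' I : {set 'I_n}) a b :
  [disjoint F & I] -> [disjoint F' & I] -> F :|: (I :\ a) = F' :|: (I :\ b) -> F = F'.
Proof.
move=> dF dF' E; apply/setP => x.
case xI: (x \in I); first by rewrite (disjointFl dF xI) (disjointFl dF' xI).
have := congr1 (fun S : {set 'I_n} => x \in S) E; by rewrite /= !inE xI !andbF !orbF.
Qed.

Unset Implicit Arguments.

Theorem proposition4p4 (R : realType) (d n : nat) (v : 'I_n -> 'I_d -> int)
  (hN : 'I_d -> int) (Tp Tm : {set {set 'I_n}}) (h : 'I_n -> int) :
  injective v ->
  (forall x : 'I_d -> int, exists l : 'I_n -> int,
      forall i, x i = \sum_(j < n) l j * v j i) ->
  (forall j, \sum_(i < d) hN i * v j i = 1) ->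
  secondary_edge R v Tp Tm ->
  primitive_circuit_relation R v h ->
  circuit_flip Tp Tm h ->
  (* (i) *)
  ((forall x : 'I_d -> int,
      (box R v Tp x /\ ~ box_es R v Tp (supp h) (suppP h) x) <->
      (box R v Tm x /\ ~ box_es R v Tm (supp h) (suppN h) x)) /\
   (forall x : 'I_d -> int,
      box R v Tp x -> ~ box_es R v Tp (supp h) (suppP h) x ->
      (forall Fp Fm, min_cone R v Tp x Fp -> min_cone R v Tm x Fm ->
         Fp = Fm) /\
      (forall qp qm : 'I_n -> R, box_rep v Tp x qp -> box_rep v Tm x qm ->
         forall j, yvec qp j = yvec qm j))) /\
  (* (ii) *)
  ((forall x : 'I_d -> int, box_es R v Tp (supp h) (suppP h) x ->
      forall q : 'I_n -> R, box_rep v Tp x q ->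
      forall t : R[i], calI h (yvec q) t ->
      exists x' : 'I_d -> int, box_es R v Tm (supp h) (suppN h) x' /\
        exists2 q' : 'I_n -> R, box_rep v Tm x' q' &
          forall j, yvec q j * t ^ h j = yvec q' j) /\
   (forall x' : 'I_d -> int, box_es R v Tm (supp h) (suppN h) x' ->
      forall q' : 'I_n -> R, box_rep v Tm x' q' ->
      exists x : 'I_d -> int, box_es R v Tp (supp h) (suppP h) x /\
        exists q : 'I_n -> R, box_rep v Tp x q /\
          exists2 t : R[i], calI h (yvec q) t &
            forall j, yvec q j * t ^ h j = yvec q' j)).
Proof.
move=> vinj vgen hNp Hse Hpc Hflip.
have trip : triangulation R v Tp by case: Hse => [[]].
have trim : triangulation R v Tm by case: Hse => _ [[]].
case: Hpc => Hrel Hsupp _ _.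
have hl : lincomb v (fun j => (h j)%:~R : R) (fun _ => 0).
  move=> i; have := congr1 (fun z : int => z%:~R : R) (Hrel i).
  rewrite /= rmorph_sum /= mulr0z => H; rewrite -[LHS]H; apply: eq_bigr => j _; by rewrite intrM.
have hl' : lincomb v (fun j => - (h j)%:~R : R) (fun _ => 0).
  move=> i; rewrite -[LHS]oppr0 [in LHS](hl i) -sumrN; apply: eq_bigr => j _; by rewrite mulNr.
have memI j : (j \in supp h) = (h j != 0) by rewrite inE.
have memP j : (j \in suppP h) = (0 < h j) by rewrite inE.
have memN j : (j \in suppN h) = (h j < 0) by rewrite inE.
have hsum : \sum_(j < n) h j = 0.
  transitivity (\sum_(j < n) h j * \sum_(i < d) hN i * v j i).
    by under [RHS]eq_bigr do rewrite hNp mulr1.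
  under eq_bigr do rewrite big_distrr /=.
  rewrite exchange_big /=; apply: big1 => i _.
  rewrite -[RHS](mulr0 (hN i)) -[in RHS](Hrel i) big_distrr /=.
  by apply: eq_bigr => j _; ring.
have hnz : exists j, h j != 0.
  case: (set_0Vmem (supp h)) => [E|[j]]; last by rewrite memI; exists j.
  by move: Hsupp; rewrite E eqxx.
have [k0 k0P] : exists k, k \in suppP h.
  case: (set_0Vmem (suppP h)) => [E|[k kP]]; last by exists k.
  exfalso; case: hnz => j; apply/negP; rewrite negbK.
  have H0 : forall i, 0 <= - h i.
    move=> i; have : i \notin suppP h by rewrite E inE.
    by rewrite memP -leNgt oppr_ge0.
  have := @psumr_eq0P _ _ predT (fun i => - h i) (fun i _ => H0 i).
  rewrite sumrN hsum oppr0 => /(_ erefl j isT) /eqP; by rewrite oppr_eq0.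
have [j0 j0N] : exists j, j \in suppN h.
  case: (set_0Vmem (suppN h)) => [E|[k kP]]; last by exists k.
  exfalso; case: hnz => j; apply/negP; rewrite negbK.
  have H0 : forall i, 0 <= h i.
    move=> i; have : i \notin suppN h by rewrite E inE.
    by rewrite memN -leNgt.
  have := @psumr_eq0P _ _ predT (fun i => h i) (fun i _ => H0 i).
  by rewrite hsum => /(_ erefl j isT) /eqP.
have memS (F : {set 'I_n}) j i : (i \in F :|: (supp h :\ j)) = (i \in F) || ((i != j) && (h i != 0)).
  by rewrite finset.in_setU finset.in_setD1 memI.
have [F0 sepF0] : exists F0, separating Tp (supp h) (suppP h) F0.
  case: (pselect (exists F0, separating Tp (supp h) (suppP h) F0)) => // nos; exfalso.
  have ETT : Tm = Tp.
    apply/finset.setP => S; apply/idP/idP.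
    - move/Hflip => [[]//|[F [j [sepF _ _]]]]; by case: nos; exists F.
    - move=> ST; apply/Hflip; left; split => // [[F [j [sepF _ _]]]]; by case: nos; exists F.
  by case: Hse => _ [_ [+ _]]; rewrite ETT.
have flipP (F : {set 'I_n}) j : separating Tp (supp h) (suppP h) F -> j \in suppN h ->
    F :|: (supp h :\ j) \in Tm.
  by move=> sF jN; apply/Hflip; right; exists F, j.
have notinF (F : {set 'I_n}) k : [disjoint F & supp h] -> h k != 0 -> k \notin F :|: (supp h :\ k).
  move=> dF hk; rewrite memS eqxx /= orbF.
  by rewrite (disjointFl dF) // memI.
have noTpI (F : {set 'I_n}) j : j \in suppN h -> F :|: (supp h :\ j) \in Tp -> False.
  move=> jN ST; rewrite memN in jN; have hk0 : 0 < h k0 by rewrite -memP.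
  apply: (circuit_contra trip ST (sepF0.2 k0 k0P) hl (k:=k0)).
  - move=> i; rewrite ltr0z => hi; rewrite memS; apply/orP; right; apply/andP; split.
      by apply/eqP => E; move: (lt_trans jN hi); rewrite E ltxx.
    by rewrite gt_eqF.
  - move=> i; rewrite ltrz0 => hi; rewrite memS; apply/orP; right; apply/andP; split.
      by apply/eqP => E; move: (lt_trans hi hk0); rewrite E ltxx.
    by rewrite lt_eqF.
  - by rewrite ltr0z.
  - apply: notinF; first exact: sepF0.1.
    by rewrite gt_eqF.
have sepmp (F : {set 'I_n}) : separating Tm (supp h) (suppN h) F -> separating Tp (supp h) (suppP h) F.
  move=> [dF sF]; have := sF j0 j0N; move/Hflip => [[ST _]|[F' [j [sF' jN E]]]].
    by case: (noTpI F j0 j0N ST).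
  by rewrite (setUD_inj dF sF'.1 E).
have sepTm (F : {set 'I_n}) : separating Tp (supp h) (suppP h) F -> separating Tm (supp h) (suppN h) F.
  move=> sF; split; first exact: sF.1.
  by move=> j jN; apply: flipP.
have essm (E : {set 'I_n}) : essential Tm (supp h) (suppN h) E -> exists F j,
    [/\ separating Tp (supp h) (suppP h) F, j \in suppN h & E = F :|: (supp h :\ j)].
  by move=> [F [j [sF jN ->]]]; exists F, j; split => //; apply: sepmp.
have fwd x : box R v Tp x -> ~ box_es R v Tp (supp h) (suppP h) x ->
  exists S (q : 'I_n -> R), [/\ S \in Tp, (forall j, j \notin S -> q j = 0),
     min_cone R v Tp x [set j | q j != 0], min_cone R v Tm x [set j | q j != 0] &
     (box R v Tm x /\ ~ box_es R v Tm (supp h) (suppN h) x)].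
  move=> [S ST [q [q01 qS qx]]] nes.
  have q0 j : 0 <= q j by case/andP: (q01 j).
  have mp := min_coneP trip ST q0 qS qx.
  have GS := supp_sub qS.
  have Sne : ~ essential Tp (supp h) (suppP h) S.
    move=> HE; apply: nes; split; first by exists S => //; exists q.
    by exists [set j | q j != 0]; split => //; exists S.
  have STm : S \in Tm by apply/Hflip; left.
  have mm := min_coneP trim STm q0 qS qx.
  exists S, q; split => //; split; first by exists S => //; exists q.
  move=> [_ [G' [mG' [E [HE G'E]]]]].
  rewrite -(min_cone_uniq mm mG') in G'E.
  have [F [j [sF jN EE]]] := essm E HE.
  rewrite EE in G'E.
  case: (boolP (suppP h \subset [set j | q j != 0])) => PG.
    exfalso; have hk0 : 0 < h k0 by rewrite -memP.
    apply: (circuit_contra trip ST (sF.2 k0 k0P) hl (k:=k0)).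
    - move=> i; rewrite ltr0z -memP => iP.
      exact: (fintype.subsetP GS _ (fintype.subsetP PG _ iP)).
    - move=> i; rewrite ltrz0 => hi; rewrite memS; apply/orP; right; apply/andP; split.
        by apply/eqP => E'; move: (lt_trans hi hk0); rewrite E' ltxx.
      by rewrite lt_eqF.
    - by rewrite ltr0z.
    - by apply: notinF; [exact: sF.1 | rewrite gt_eqF].
  case/subsetPn: PG => k kP kG.
  apply: nes; split; first by exists S => //; exists q.
  exists [set j | q j != 0]; split => //.
  exists (F :|: (supp h :\ k)); split; first by exists F, k; split.
  apply/fintype.subsetP => i iG; have := fintype.subsetP G'E i iG; rewrite !memS.
  case/orP => [->//|/andP[_ ->]]; rewrite andbT orbC; apply/orP; left.
  by apply/eqP => E'; move: kG; rewrite -E' iG.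
have bwd x : box R v Tm x -> ~ box_es R v Tm (supp h) (suppN h) x ->
    box R v Tp x /\ ~ box_es R v Tp (supp h) (suppP h) x.
  move=> [S STm [q [q01 qS qx]]] nes.
  have q0 j : 0 <= q j by case/andP: (q01 j).
  have mm := min_coneP trim STm q0 qS qx.
  have GS := supp_sub qS.
  have Sne : ~ essential Tm (supp h) (suppN h) S.
    move=> HE; apply: nes; split; first by exists S => //; exists q.
    by exists [set j | q j != 0]; split => //; exists S.
  have ST : S \in Tp.
    move/Hflip: STm => [[]//|[F [j [sF jN E]]]].
    by case: Sne; exists F, j; split => //; apply: sepTm.
  have mp := min_coneP trip ST q0 qS qx.
  split; first by exists S => //; exists q.
  move=> [_ [G' [mG' [E [HE G'E]]]]].
  rewrite -(min_cone_uniq mp mG') in G'E.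
  case: HE => [F [k [sF kP EE]]]; rewrite EE in G'E.
  case: (boolP (suppN h \subset [set j | q j != 0])) => NG.
    exfalso; have hj0 : h j0 < 0 by rewrite -memN.
    apply: (circuit_contra trim STm (flipP F j0 sF j0N) hl' (k:=j0)).
    - move=> i; rewrite oppr_gt0 ltrz0 -memN => iN.
      exact: (fintype.subsetP GS _ (fintype.subsetP NG _ iN)).
    - move=> i; rewrite oppr_lt0 ltr0z => hi; rewrite memS; apply/orP; right; apply/andP; split.
        by apply/eqP => E'; move: (lt_trans hj0 hi); rewrite E' ltxx.
      by rewrite gt_eqF.
    - by rewrite oppr_gt0 ltrz0.
    - by apply: notinF; [exact: sF.1 | rewrite lt_eqF].
  case/subsetPn: NG => j jN jG.
  apply: nes; split; first by exists S => //; exists q.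
  exists [set j | q j != 0]; split => //.
  exists (F :|: (supp h :\ j)); split; first by exists F, j; split => //; apply: sepTm.
  apply/fintype.subsetP => i iG; have := fintype.subsetP G'E i iG; rewrite !memS.
  case/orP => [->//|/andP[_ ->]]; rewrite andbT orbC; apply/orP; left.
  by apply/eqP => E'; move: jG; rewrite -E' iG.
split.
  split.
    move=> x; split.
      by move=> [bx nes]; have [S [q [_ _ _ _ H]]] := fwd x bx nes.
    by move=> [bx nes]; exact: bwd x bx nes.
  move=> x bx nes; have [S [q [ST qS mp mm _]]] := fwd x bx nes; split.
    move=> Fp Fm mFp mFm.
    by rewrite -(min_cone_uniq mp mFp) -(min_cone_uniq mm mFm).
  move=> qp qm [F1 [mF1 _ qp0 qpx]] [F2 [mF2 _ qm0 qmx]] j.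
  rewrite -(min_cone_uniq mp mF1) in qp0.
  rewrite -(min_cone_uniq mm mF2) in qm0.
  have GS := supp_sub qS.
  case: trip => T1 _ _.
  have e := lin_unique (proj2 (T1 S ST)) (c1 := qp) (c2 := qm)
    (fun i iS => qp0 i (contra (fun h => fintype.subsetP GS i h) iS))
    (fun i iS => qm0 i (contra (fun h => fintype.subsetP GS i h) iS)) qpx qmx.
  by rewrite /yvec e.
split.
  move=> x [_ [G [mG [E [HE GE]]]]] q [G1 [mG1 q01 qG1 qx]] t [t0 [j jN Hj]].
  rewrite -(min_cone_uniq mG mG1) in qG1.
  case: HE => [F [k [sF kP EE]]]; rewrite EE in GE.
  have hj : h j < 0 by rewrite -memN.
  have hj0 : h j != 0 by rewrite lt_eqF.
  have Hj' : ee (q j) * t ^ h j = 1 by exact: Hj.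
  have [th Eth] := ee_surj (norm_t1 hj0 Hj').
  subst t.
  pose r i := q i + th * (h i)%:~R.
  pose q' i := frac (r i).
  have Er i : ee (q i) * ee th ^ h i = ee (q' i) by rewrite eeX eeD /q' ee_frac.
  have q'01 i : 0 <= q' i < 1 by exact: frac01.
  have q'0 i : 0 <= q' i by case/andP: (q'01 i).
  have q'j : q' j = 0 by apply: ee_eq1 => //; rewrite -Er.
  pose x' i := x i - \sum_(l < n) Num.floor (r l) * v l i.
  have lx' : lincomb v q' (fun i => (x' i)%:~R) :=
    lincomb_shift th (fun l => Num.floor (r l)) qx hl.
  have S'Tm := flipP F j sF jN.
  have q'S : forall i, i \notin F :|: (supp h :\ j) -> q' i = 0.
    move=> i; rewrite memS negb_or negb_and !negbK => /andP[iF /orP[/eqP->//|/eqP hi0]].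
    have qi : q i = 0.
      apply: qG1; apply: contra iF => iG; have := fintype.subsetP GE i iG.
      by rewrite memS hi0 eqxx andbF orbF.
    by rewrite /q' /r hi0 mulr0z mulr0 addr0 qi frac0.
  have mm := min_coneP trim S'Tm q'0 q'S lx'.
  exists x'; split.
    split; first by exists (F :|: (supp h :\ j)) => //; exists q'.
    exists [set i | q' i != 0]; split => //.
    exists (F :|: (supp h :\ j)); split; first by exists F, j; split => //; apply: sepTm.
    exact: supp_sub q'S.
  exists q'.
    by exists [set i | q' i != 0]; split => // i; rewrite inE negbK => /eqP.
  move=> i; exact: Er i.
move=> x' [_ [G' [mG' [E [HE G'E]]]]] q' [G1 [mG1 q'01 q'G1 q'x]].
rewrite -(min_cone_uniq mG' mG1) in q'G1.
have [F [j [sF jN EE]]] := essm E HE; rewrite EE in G'E.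
have hk : 0 < h k0 by rewrite -memP.
have hk0 : (h k0)%:~R != 0 :> R by rewrite intr_eq0 gt_eqF.
have hj0 : h j != 0 by rewrite lt_eqF // -memN.
pose th := q' k0 / (h k0)%:~R.
pose r i := q' i + (- th) * (h i)%:~R.
pose q i := frac (r i).
have q01 i : 0 <= q i < 1 by exact: frac01.
have q0 i : 0 <= q i by case/andP: (q01 i).
have Er i : ee (q i) * ee th ^ h i = ee (q' i).
  rewrite eeX eeD.
  have -> : q i + th * (h i)%:~R = q' i + (- Num.floor (r i))%:~R.
    by rewrite /q /frac /r intrN; ring.
  exact: eeDz.
have qk : q k0 = 0 by rewrite /q /r /th mulNr mulfVK // subrr frac0.
pose x i := x' i - \sum_(l < n) Num.floor (r l) * v l i.
have lx : lincomb v q (fun i => (x i)%:~R) :=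
  lincomb_shift (- th) (fun l => Num.floor (r l)) q'x hl.
have STp := sF.2 k0 k0P.
have qS : forall i, i \notin F :|: (supp h :\ k0) -> q i = 0.
  move=> i; rewrite memS negb_or negb_and !negbK => /andP[iF /orP[/eqP->//|/eqP hi0]].
  have q'i : q' i = 0.
    apply: q'G1; apply: contra iF => iG; have := fintype.subsetP G'E i iG.
    by rewrite memS hi0 eqxx andbF orbF.
  by rewrite /q /r hi0 mulr0z mulr0 addr0 q'i frac0.
have mp := min_coneP trip STp q0 qS lx.
exists x; split.
  split; first by exists (F :|: (supp h :\ k0)) => //; exists q.
  exists [set i | q i != 0]; split => //.
  exists (F :|: (supp h :\ k0)); split; first by exists F, k0; split.
  exact: supp_sub qS.
exists q; split.
  by exists [set i | q i != 0]; split => // i; rewrite inE negbK => /eqP.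
exists (ee th).
  split; first exact: ee_neq0.
  exists j => //.
  have q'j : q' j = 0.
    apply: q'G1; apply: contra (notinF _ _ sF.1 hj0) => jG.
    exact: fintype.subsetP G'E j jG.
  by have := Er j; rewrite q'j ee0.
move=> i; exact: Er i.
Qed.
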